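(* Let $\mathscr C$ be a concept class on a set $\Omega$ and $d\in\mathbb N$. The following are equivalent: (1) $\mathrm{VC}(\mathscr C\,\mathrm{mod}\,\omega_1)\le d$; (2) for every countable subclass $\mathscr C'\subseteq\mathscr C$ there exists a countable set $N\subseteq\Omega$ such that $\mathrm{VC}(\mathscr C'\restriction(\Omega\setminus N))\le d$.
   Context: $\mathrm{VC}(\mathscr C\restriction X)$ is the VC dimension of $\{C\cap X:C\in\mathscr C\}$. $\mathrm{VC}(\mathscr C\,\mathrm{mod}\,\omega_1)$ is the supremum of $n$ for which there exist uncountable sets $A_1,\dots,A_n\subseteq\Omega$ such that for every $J\subseteq\{1,\dots,n\}$ some $C\in\mathscr C$ contains $A_i$ for all $i\in J$ and is disjoint from $A_j$ for all $j\notin J$. *)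

(* Defs.v *)
From Stdlib Require Import List Arith.
Import ListNotations.

(* A set is countable (finite or countably infinite) if it is covered by the
   range of a map from nat (option allows the empty set). *)
Definition countable {T : Type} (A : T -> Prop) : Prop :=
  exists f : nat -> option T, forall x, A x -> exists n, f n = Some x.

Definition concept_class (Omega : Type) := (Omega -> Prop) -> Prop.

Definition shatters {Omega : Type} (C : concept_class Omega) (S : list Omega) : Prop :=
  forall J : Omega -> Prop,
    exists c, C c /\ forall x, In x S -> (c x <-> J x).

(* VC(C restricted to X) <= d : every finite S included in X shattered by
   {c ∩ X : c ∈ C} has at most d elements. (For S ⊆ X, being shattered by the
   traces c ∩ X is the same as being shattered by C.) *)
Definition VC_restr_le {Omega : Type} (C : concept_class Omega)
    (X : Omega -> Prop) (d : nat) : Prop :=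
  forall S : list Omega, NoDup S -> (forall x, In x S -> X x) ->
    shatters C S -> length S <= d.

Definition VC_mod_omega1_le {Omega : Type} (C : concept_class Omega) (d : nat) : Prop :=
  forall (n : nat) (A : nat -> Omega -> Prop),
    (forall i, i < n -> ~ countable (A i)) ->
    (forall J : nat -> Prop,
        exists c, C c /\
          forall i, i < n ->
            (J i -> forall x, A i x -> c x) /\
            (~ J i -> forall x, A i x -> ~ c x)) ->
    n <= d.

(* Main.v *)
Require Import Defs.
From Stdlib Require Import List Arith Cantor Classical ClassicalEpsilon Lia.

Lemma bits_exist (P : nat -> Prop) n :
  exists m, forall i, i < n -> (Nat.testbit m i = true <-> P i).
Proof.
  induction n as [|n [m Hm]].
  - exists 0; intros; lia.
  - destruct (classic (P n)) as [Hp|Hp].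
    + exists (Nat.setbit m n). intros i Hi.
      destruct (Nat.eq_dec i n) as [->|Hne].
      * rewrite Nat.setbit_eq; tauto.
      * rewrite Nat.setbit_neq by lia. apply Hm; lia.
    + exists (Nat.clearbit m n). intros i Hi.
      destruct (Nat.eq_dec i n) as [->|Hne].
      * rewrite Nat.clearbit_eq; split; [discriminate|tauto].
      * rewrite Nat.clearbit_neq by lia. apply Hm; lia.
Qed.

Lemma bound_exists (Q : nat -> nat -> Prop) K :
  (forall m, m < K -> exists i, Q m i) ->
  exists a, forall m, m < K -> exists i, i < a /\ Q m i.
Proof.
  induction K as [|K IH]; intros H.
  - exists 0; intros; lia.
  - destruct IH as [a Ha]. { intros; apply H; lia. }
    destruct (H K) as [i Hi]; [lia|].
    exists (S (a + i)). intros m Hm.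
    destruct (Nat.eq_dec m K) as [->|Hne].
    + exists i; split; [lia|auto].
    + destruct (Ha m) as [j [Hj Qj]]; [lia|]. exists j; split; [lia|auto].
Qed.

Lemma countable_sub {T} (A B : T -> Prop) :
  (forall x, A x -> B x) -> countable B -> countable A.
Proof. intros H [f Hf]. exists f. intros x Ax. apply Hf, H, Ax. Qed.

Lemma countable_union {T} (I : nat -> T -> Prop) :
  countable (fun y => exists k, countable (I k) /\ I k y).
Proof.
  assert (E : forall k, exists h : nat -> option T,
     countable (I k) -> forall x, I k x -> exists n, h n = Some x).
  { intro k. destruct (classic (countable (I k))) as [[h Hh]|Hn].
    - exists h; auto.
    - exists (fun _ => None); tauto. }
  set (h := fun k => proj1_sig (constructive_indefinite_description _ (E k))).
  exists (fun n => h (fst (Cantor.of_nat n)) (snd (Cantor.of_nat n))).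
  intros x [k [Hc Hx]].
  destruct (proj2_sig (constructive_indefinite_description _ (E k)) Hc x Hx) as [m Hm].
  exists (Cantor.to_nat (k, m)). rewrite Cantor.cancel_of_to. simpl. exact Hm.
Qed.

Lemma dir2 (Omega : Type) (C : concept_class Omega) (d : nat) :
  (forall C' : concept_class Omega,
     (forall c, C' c -> C c) -> countable C' ->
     exists N : Omega -> Prop, countable N /\
       VC_restr_le C' (fun x => ~ N x) d) -> VC_mod_omega1_le C d.
Proof.
  intros H2 n A HA Hsh.
  assert (G : forall m, exists c, C c /\ forall i, i < n ->
            (Nat.testbit m i = true -> forall x, A i x -> c x) /\
            (~ Nat.testbit m i = true -> forall x, A i x -> ~ c x)).
  { intro m. apply (Hsh (fun i => Nat.testbit m i = true)). }
  set (g := fun m => proj1_sig (constructive_indefinite_description _ (G m))).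
  assert (Hg : forall m, C (g m) /\ forall i, i < n ->
            (Nat.testbit m i = true -> forall x, A i x -> g m x) /\
            (~ Nat.testbit m i = true -> forall x, A i x -> ~ g m x)).
  { intro m. exact (proj2_sig (constructive_indefinite_description _ (G m))). }
  destruct (H2 (fun c => exists m, c = g m)) as [N [HN HVC]].
  { intros c [m ->]. apply Hg. }
  { exists (fun m => Some (g m)). intros x [m ->]. exists m; reflexivity. }
  destruct n as [|n']; [lia|].
  assert (Hx : forall i, i < S n' -> exists x, A i x /\ ~ N x).
  { intros i Hi. apply NNPP. intro Hno. apply (HA i Hi).
    apply (countable_sub _ N); auto.
    intros x Ax. apply NNPP. intro Nx. apply Hno. exists x; auto. }
  destruct (Hx 0) as [x0 _]; [lia|].
  assert (Hx' : forall i, exists x, i < S n' -> A i x /\ ~ N x).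
  { intro i. destruct (lt_dec i (S n')) as [Hi|Hi].
    - destruct (Hx i Hi) as [x Px]. exists x; auto.
    - exists x0; tauto. }
  set (xs := fun i => proj1_sig (constructive_indefinite_description _ (Hx' i))).
  assert (Hxs : forall i, i < S n' -> A i (xs i) /\ ~ N (xs i)).
  { intro i. exact (proj2_sig (constructive_indefinite_description _ (Hx' i))). }
  set (n := S n') in *. clearbody n.
  replace n with (length (map xs (seq 0 n))) by (rewrite length_map, length_seq; auto).
  apply HVC.
  - apply NoDup_map_NoDup_ForallPairs; [|apply seq_NoDup].
    intros i j Hi Hj Heq. apply in_seq in Hi, Hj.
    destruct (Nat.eq_dec i j) as [|Hne]; auto. exfalso.
    destruct (bits_exist (fun k => k = i) n) as [m Hm].
    destruct (Hg m) as [_ Hgm].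
    assert (g m (xs i)).
    { apply (proj1 (Hgm i ltac:(lia))). apply Hm; auto; lia. apply Hxs; lia. }
    apply (proj2 (Hgm j ltac:(lia))) with (xs j).
    + rewrite Hm by lia. auto.
    + apply Hxs; lia.
    + rewrite <- Heq; auto.
  - intros x Hin. apply in_map_iff in Hin as [i [<- Hi]]. apply in_seq in Hi.
    apply Hxs; lia.
  - intro J'. destruct (bits_exist (fun i => J' (xs i)) n) as [m Hm].
    exists (g m). split; [eauto|].
    intros x Hin. apply in_map_iff in Hin as [i [<- Hi]]. apply in_seq in Hi.
    destruct (Hg m) as [_ Hgm]. destruct (Hgm i ltac:(lia)) as [H1 H3].
    split.
    + intro Hc. apply NNPP. intro HJ. apply (H3 ltac:(rewrite Hm by lia; exact HJ) (xs i)); auto.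
      apply Hxs; lia.
    + intro HJ. apply H1. apply Hm; auto; lia. apply Hxs; lia.
Qed.

Lemma dir1 (Omega : Type) (C : concept_class Omega) (d : nat) :
  VC_mod_omega1_le C d ->
  (forall C' : concept_class Omega,
     (forall c, C' c -> C c) -> countable C' ->
     exists N : Omega -> Prop, countable N /\
       VC_restr_le C' (fun x => ~ N x) d).
Proof.
  intros H1 C' HC' [e He].
  set (concept := fun i y => match e i with Some c => c y | None => False end).
  set (Atom := fun a b y => forall i, i < a -> (concept i y <-> Nat.testbit b i = true)).
  set (I := fun k => Atom (fst (Cantor.of_nat k)) (snd (Cantor.of_nat k))).
  exists (fun y => exists k, countable (I k) /\ I k y).
  split; [apply countable_union|].
  intros S HND HS Hsh.
  set (n := length S).
  set (Jm := fun m y => exists j, j < n /\ Nat.testbit m j = true /\ nth_error S j = Some y).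
  destruct (bound_exists (fun m i => exists c, e i = Some c /\ C' c /\
      forall x, In x S -> (c x <-> Jm m x)) (2 ^ n)) as [a Ha].
  { intros m _. destruct (Hsh (Jm m)) as [c [Cc Hc]].
    destruct (He c Cc) as [i Hi]. exists i, c. auto. }
  set (A := fun j y => exists x, nth_error S j = Some x /\
                 forall i, i < a -> (concept i y <-> concept i x)).
  apply (H1 n A).
  - intros j Hj Hcnt.
    destruct (nth_error S j) as [x|] eqn:Ex.
    2:{ apply nth_error_Some in Ex; auto. }
    destruct (bits_exist (fun i => concept i x) a) as [b Hb].
    apply (HS x (nth_error_In _ _ Ex)).
    exists (Cantor.to_nat (a, b)). unfold I. rewrite Cantor.cancel_of_to. simpl.
    split.
    + apply (countable_sub _ (A j)); auto.
      intros y Hy. exists x. split; auto. intros i Hi.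
      rewrite (Hy i Hi), (Hb i Hi). tauto.
    + intros i Hi. rewrite (Hb i Hi). tauto.
  - intro J. destruct (bits_exist J n) as [m0 Hm0].
    set (m := m0 mod 2 ^ n).
    assert (Hm : forall j, j < n -> (Nat.testbit m j = true <-> J j)).
    { intros j Hj. unfold m. rewrite Nat.mod_pow2_bits_low by auto. auto. }
    destruct (Ha m) as [i [Hia [c [Ei [Cc Hc]]]]].
    { apply Nat.mod_upper_bound. apply Nat.pow_nonzero. lia. }
    exists c. split; [auto|].
    assert (Hconc : forall y, concept i y <-> c y).
    { intro y. unfold concept. rewrite Ei. tauto. }
    intros j Hj. split.
    + intros HJ y [x [Ex Hy]].
      apply Hconc, (Hy i Hia), Hconc.
      apply (Hc x (nth_error_In _ _ Ex)). exists j. split; auto. split; auto.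
      apply Hm; auto.
    + intros HJ y [x [Ex Hy]] Hcy.
      assert (Hcx : c x) by (apply Hconc, (Hy i Hia), Hconc; auto).
      apply (Hc x (nth_error_In _ _ Ex)) in Hcx as [j' [Hj' [Hb Ex']]].
      assert (j' = j).
      { apply (proj1 (NoDup_nth_error S) HND); auto. congruence. }
      subst j'. apply HJ, Hm; auto.
Qed.

Theorem mainTheorem17 (Omega : Type) (C : concept_class Omega) (d : nat) :
  VC_mod_omega1_le C d <->
  (forall C' : concept_class Omega,
     (forall c, C' c -> C c) -> countable C' ->
     exists N : Omega -> Prop, countable N /\
       VC_restr_le C' (fun x => ~ N x) d).
Proof.
  split; [apply dir1 | apply dir2].
Qed.
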